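(* Let each $f_\xi:\mathbb{R}^d\to\mathbb{R}$, $\xi\sim\mathcal{D}$, be differentiable and $\mu$-strongly convex with $\mu>0$, let $f=\mathbb{E}_{\xi\sim\mathcal{D}}[f_\xi]$ with minimizer $x_\star$, and define $\sigma_\star^2:=\mathbb{E}_{\xi\sim\mathcal{D}}\|\nabla f_\xi(x_\star)\|^2$. Let $x_0\in\mathbb{R}^d$ be arbitrary and consider SPPM: $x_{k+1}=\operatorname{prox}_{\gamma f_{\xi_k}}(x_k)$, with $\xi_k\sim\mathcal{D}$ sampled independently at each step. Then for any $\gamma>0$ and any $k\ge0$, $$\mathbb{E}\|x_k-x_\star\|^2\le\left(\frac{1}{1+\gamma\mu}\right)^{2k}\|x_0-x_\star\|^2+\frac{\gamma\sigma_\star^2}{\gamma\mu^2+2\mu}.$$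
   Context: $\operatorname{prox}_{\gamma\phi}(y):=\arg\min_{x\in\mathbb{R}^d}\{\phi(x)+\frac{1}{2\gamma}\|x-y\|^2\}$. $\mu$-strong convexity of $g$: $g(y)+\langle\nabla g(y),x-y\rangle+\frac{\mu}{2}\|x-y\|^2\le g(x)$ for all $x,y$. Differentiation and expectation are assumed interchangeable, so $\nabla f=\mathbb{E}[\nabla f_\xi]$. *)

(* Defs.v *)
From HB Require Import structures.
From mathcomp Require Import all_boot all_order all_algebra.
From mathcomp Require Import all_classical all_reals all_analysis.
Set Implicit Arguments. Unset Strict Implicit. Unset Printing Implicit Defensive.
Import Order.TTheory GRing.Theory Num.Theory.
Import numFieldNormedType.Exports.
Local Open Scope classical_set_scope.
Local Open Scope ring_scope.

Section Defs.
Variables (R : realType) (n : nat).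

Definition dotp (u v : 'rV[R]_n) : R := \sum_(i < n) u 0 i * v 0 i.
Definition sqnorm (u : 'rV[R]_n) : R := dotp u u.

Definition gradient (f : 'rV[R]_n -> R) (x : 'rV[R]_n) : 'rV[R]_n :=
  \row_i ('d f x (delta_mx 0 i)).

Definition strongly_convex (mu : R) (g : 'rV[R]_n -> R) : Prop :=
  forall x y, g y + dotp (gradient g y) (x - y) + mu / 2 * sqnorm (x - y) <= g x.

Definition is_prox (gamma : R) (phi : 'rV[R]_n -> R) (y x : 'rV[R]_n) : Prop :=
  forall z, phi x + sqnorm (x - y) / (2 * gamma) <= phi z + sqnorm (z - y) / (2 * gamma).

(* prox_{gamma phi}(y) := argmin (chosen by choice; unique when it exists
   for strongly convex phi) *)
Definition prox (gamma : R) (phi : 'rV[R]_n -> R) (y : 'rV[R]_n) : 'rV[R]_n :=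
  xget 0 (is_prox gamma phi y).

Variables (d : measure_display) (Xi : measurableType d) (P : probability Xi R).

Definition expect_fun (F : Xi -> 'rV[R]_n -> R) (x : 'rV[R]_n) : R :=
  fine (\int[P]_xi (F xi x)%:E).

Definition sigma_star2 (F : Xi -> 'rV[R]_n -> R) (xstar : 'rV[R]_n) : \bar R :=
  \int[P]_xi (sqnorm (gradient (F xi) xstar))%:E.

(* sppm_expect F gamma g k x = E[ g(x_k) ] where x_0 = x and
   x_{j+1} = prox_{gamma f_{xi_j}}(x_j) with xi_0, xi_1, ... i.i.d. ~ P:
   the expectation over the independent samples as an iterated integral
   (outermost integral over xi_0). *)
Fixpoint sppm_expect (F : Xi -> 'rV[R]_n -> R) (gamma : R)
    (g : 'rV[R]_n -> \bar R) (k : nat) (x : 'rV[R]_n) : \bar R :=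
  match k with
  | 0 => g x
  | k'.+1 => \int[P]_xi sppm_expect F gamma g k' (prox gamma (F xi) x)
  end.

End Defs.

(* Main.v *)
Require Import Defs.
From HB Require Import structures.
From mathcomp Require Import all_boot all_order all_algebra.
From mathcomp Require Import all_classical all_reals all_analysis.
From mathcomp Require Import ring lra.
Import Order.TTheory GRing.Theory Num.Theory.
Import numFieldNormedType.Exports.
Local Open Scope classical_set_scope.
Local Open Scope ring_scope.

Set Implicit Arguments. Unset Strict Implicit.

Section Alg.
Variables (R : realType) (n : nat).
Implicit Types (u v w : 'rV[R]_n) (a b : R).

Lemma dotpC u v : dotp u v = dotp v u.
Proof. by rewrite /dotp; apply: eq_bigr => i _; rewrite mulrC. Qed.

Lemma dotpDl u v w : dotp (u + v) w = dotp u w + dotp v w.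
Proof. by rewrite /dotp -big_split; apply: eq_bigr => i _; rewrite mxE mulrDl. Qed.

Lemma dotpZl a u v : dotp (a *: u) v = a * dotp u v.
Proof. by rewrite /dotp mulr_sumr; apply: eq_bigr => i _; rewrite mxE mulrA. Qed.

Lemma dotpNl u v : dotp (- u) v = - dotp u v.
Proof. by rewrite -scaleN1r dotpZl mulN1r. Qed.

Lemma dotpBl u v w : dotp (u - v) w = dotp u w - dotp v w.
Proof. by rewrite dotpDl dotpNl. Qed.

Lemma dotpDr u v w : dotp w (u + v) = dotp w u + dotp w v.
Proof. by rewrite dotpC dotpDl !(dotpC w). Qed.
Lemma dotpZr a u v : dotp v (a *: u) = a * dotp v u.
Proof. by rewrite dotpC dotpZl dotpC. Qed.
Lemma dotpBr u v w : dotp w (u - v) = dotp w u - dotp w v.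
Proof. by rewrite dotpC dotpBl !(dotpC w). Qed.

Lemma sqnorm_ge0 u : 0 <= sqnorm u.
Proof. by rewrite /sqnorm /dotp; apply: sumr_ge0 => i _; rewrite -expr2 sqr_ge0. Qed.

Lemma sqnormB u v : sqnorm (u - v) = sqnorm u - 2 * dotp u v + sqnorm v.
Proof. rewrite /sqnorm !dotpBl !dotpBr (dotpC v u); lra. Qed.

Lemma sqnormD u v : sqnorm (u + v) = sqnorm u + 2 * dotp u v + sqnorm v.
Proof. rewrite /sqnorm !dotpDl !dotpDr (dotpC v u); lra. Qed.

Lemma sqnormZ a u : sqnorm (a *: u) = a ^+ 2 * sqnorm u.
Proof. by rewrite /sqnorm dotpZl dotpZr mulrA -expr2. Qed.

Lemma coord_sq_le u (i : 'I_n) : u 0 i ^+ 2 <= sqnorm u.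
Proof.
rewrite /sqnorm /dotp (bigD1 i) //= -expr2 lerDl.
by apply: sumr_ge0 => j _; rewrite -expr2 sqr_ge0.
Qed.

End Alg.


Section Prox.
Variables (R : realType) (n : nat).
Implicit Types (u v w x y z : 'rV[R]_n).

Lemma lim_1mt (a b : R) : (forall t, 0 < t < 1 -> (1 - t) * b <= a) -> b <= a.
Proof.
move=> H; rewrite leNgt; apply/negP => ab.
have [b0|b0] := lerP b 0.
  have := H (2^-1) ltac:(lra). nra.
pose t := (b - a) / (2 * b - a).
have den : 0 < 2 * b - a by lra.
have t0 : 0 < t by rewrite /t divr_gt0 //; lra.
have t1 : t < 1 by rewrite /t ltr_pdivrMr //; lra.
have := H t ltac:(lra).
have -> : 1 - t = b / (2 * b - a).
  by rewrite /t; field; lra.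
rewrite mulrAC ler_pdivrMr //.
nra.
Qed.

Variables (f : 'rV[R]_n -> R) (mu gamma : R).
Hypothesis mu0 : 0 < mu.
Hypothesis g0 : 0 < gamma.
Hypothesis sc : strongly_convex mu f.

Let ig := (2 * gamma)^-1.
Let H y z := f z + sqnorm (z - y) * ig.

Lemma prox_growth y x : is_prox gamma f y x ->
  forall z, H y x + (mu / 2 + ig) * sqnorm (z - x) <= H y z.
Proof.
move=> px z; rewrite -lerBrDl; apply: lim_1mt => t /andP[t0 t1].
pose e := z - x; pose w := x + t *: e.
have ig0 : 0 < ig by rewrite /ig invr_gt0 mulr_gt0.
idtac.
have hmin : H y x <= H y w by have := px w; rewrite /H /ig.
have s1 := sc z w. have s2 := sc x w.
have e1 : z - w = (1 - t) *: e by rewrite /w /e; apply/rowP => i; rewrite !mxE; ring.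
have e2 : x - w = (- t) *: e by rewrite /w /e; apply/rowP => i; rewrite !mxE; ring.
have e3 : w - y = (x - y) + t *: e by rewrite /w; apply/rowP => i; rewrite !mxE; ring.
have e4 : z - y = (x - y) + e by rewrite /e; apply/rowP => i; rewrite !mxE; ring.
rewrite e1 e2 !sqnormZ !dotpZr in s1 s2.
rewrite /H e4 (sqnormD (x - y)).
move: hmin; rewrite /H e3 (sqnormD (x - y)) !dotpZr sqnormZ.
rewrite -/e.
set G := dotp _ e in s1 s2 *.
set E := sqnorm e in s1 s2 *.
move=> hmin.
set A := sqnorm (x - y) in hmin *. set B := dotp (x - y) e in hmin *.
have h1 := ler_wpM2l (ltW t0) s1.
have t1' : 0 <= 1 - t by lra.
have h2 := ler_wpM2l t1' s2.
rewrite -(ler_pM2l t0).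
nra.
Qed.

Lemma prox_contract y x xs : is_prox gamma f y x ->
  (1 + gamma * mu) ^+ 2 * sqnorm (x - xs)
  <= sqnorm (y - xs - gamma *: gradient f xs).
Proof.
move=> px; have pg := prox_growth px xs; have s := sc x xs.
have ig0 : 0 < ig by rewrite /ig invr_gt0 mulr_gt0.
have igE : ig * (2 * gamma) = 1 by rewrite /ig mulVf // mulf_neq0 // gt_eqF.
set g := gradient f xs in s *.
set u := x - xs in s *. set w := y - xs.
have ex1 : x - y = u - w by rewrite /u /w; apply/rowP => i; rewrite !mxE; ring.
have ex2 : xs - x = (-1) *: u by rewrite /u; apply/rowP => i; rewrite !mxE; ring.
have ex3 : xs - y = (-1) *: w by rewrite /w; apply/rowP => i; rewrite !mxE; ring.
move: pg; rewrite /H ex1 ex2 ex3 !sqnormZ sqnormB => pg.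
have am := sqnorm_ge0 ((1 + gamma * mu) *: u - (w - gamma *: g)).
rewrite sqnormB sqnormZ dotpZl dotpBr dotpZr in am.
rewrite (dotpC g u) in s.
set U := sqnorm u in s pg am *. set W := sqnorm w in pg am *.
set V := sqnorm (w - gamma *: g) in am *.
set B := dotp u w in pg am *. set C := dotp u g in s am *.
have k1 : (1 + gamma * mu) * U <= B - gamma * C.
  have : (2 * ig + mu) * U + C <= 2 * B * ig by nra.
  move=> h; have := ler_wpM2l (ltW (mulr_gt0 (ltr0n _ 2) g0)) h.
  have k a : 2 * gamma * (2 * ig * a) = 2 * a.
    have -> : 2 * gamma * (2 * ig * a) = 2 * ((ig * (2 * gamma)) * a) by ring.
    by rewrite igE mul1r.
  have k2 : 2 * gamma * (2 * B * ig) = 2 * B by rewrite -[RHS](k B); ring.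
  rewrite k2 (_ : 2 * gamma * ((2 * ig + mu) * U + C) = 2 * gamma * (2 * ig * U) + 2 * gamma * (mu * U + C)); last by ring.
  rewrite k; nra.
have m0 : 0 <= 1 + gamma * mu by rewrite addr_ge0 // mulr_ge0 // ltW.
have := ler_wpM2l m0 k1; rewrite expr2; nra.
Qed.

Lemma contM (f1 f2 : 'rV[R]_n -> R) : continuous f1 -> continuous f2 ->
  continuous (fun z => f1 z * f2 z).
Proof. move=> c1 c2 z; have := cvgM (c1 z) (c2 z); exact. Qed.
Lemma contD (f1 f2 : 'rV[R]_n -> R) : continuous f1 -> continuous f2 ->
  continuous (fun z => f1 z + f2 z).
Proof. move=> c1 c2 z; have := cvgD (c1 z) (c2 z); exact. Qed.
Lemma contC (c : R) : continuous (fun z : 'rV[R]_n => c).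
Proof. exact: cst_continuous. Qed.

Lemma sqnorm_cont y : continuous (fun z : 'rV[R]_n => sqnorm (z - y)).
Proof.
have ci i : continuous (fun z : 'rV[R]_n => (z - y) 0 i).
  move=> z.
  have -> : (fun z : 'rV[R]_n => (z - y) 0 i) = (fun z : 'rV[R]_n => z 0 i - y 0 i).
    by apply/funext => w; rewrite !mxE.
  have h1 := @coord_continuous R 1 n 0 i z.
  have := cvgB h1 (cvg_cst (y 0 i)); exact.
rewrite /sqnorm /dotp; elim: (index_enum _) => [|i s IH].
  have -> : (fun z : 'rV[R]_n => \sum_(i <- [::]) (z - y) 0 i * (z - y) 0 i) = (fun=> 0).
    by apply/funext => w; rewrite big_nil.
  exact: contC.
have -> : (fun z : 'rV[R]_n => \sum_(j <- i :: s) (z - y) 0 j * (z - y) 0 j) =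
   (fun z => (z - y) 0 i * (z - y) 0 i + \sum_(j <- s) (z - y) 0 j * (z - y) 0 j).
  by apply/funext => w; rewrite big_cons.
by apply: contD => //; apply: contM.
Qed.

Hypothesis fd : forall x, differentiable f x.

Lemma prox_exists y : exists x, is_prox gamma f y x.
Proof.
have ig0 : 0 < ig by rewrite /ig invr_gt0 mulr_gt0.
have hc : continuous (H y).
  apply: contD; last by apply: contM; [exact: sqnorm_cont|exact: contC].
  by move=> z; exact: differentiable_continuous.
pose A := [set z | H y z <= H y y].
pose C := 4 * sqnorm (gradient f y) / mu ^+ 2.
have bnd z : A z -> sqnorm (z - y) <= C.
  rewrite /A /= /H subrr.
  have -> : sqnorm (0 : 'rV[R]_n) = 0 by rewrite /sqnorm /dotp big1 // => i _; rewrite mxE mulr0.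
  move=> hz; have s := sc z y.
  have am := sqnorm_ge0 ((mu / 2) *: (z - y) + gradient f y).
  rewrite sqnormD sqnormZ dotpZl in am.
  rewrite (dotpC (gradient f y)) in s.
  have S0 := sqnorm_ge0 (z - y).
  set S := sqnorm (z - y) in hz s am S0 *.
  set G := sqnorm (gradient f y) in am *.
  set D := dotp (z - y) (gradient f y) in s am *.
  rewrite /C ler_pdivlMr ?exprn_gt0 //.
  have h1 : mu / 2 * S <= - D by nra.
  have := ler_wpM2l (ltW mu0) h1; rewrite -/G; move: am; rewrite !expr2; nra.
pose B := 1 + C.
have C0 : 0 <= C by rewrite /C divr_ge0 ?sqr_ge0 // mulr_ge0 // sqnorm_ge0.
have Abox : A `<=` [set v : 'rV[R]_n | forall i, `[y 0 i - B, y 0 i + B]%classic (v ord0 i)].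
  move=> z /bnd zC i /=; rewrite in_itv /=.
  have := coord_sq_le (z - y) i; rewrite mxE => hi.
  rewrite mxE in hi; have hi' := le_trans hi zC.
  rewrite /B; apply/andP; split; nra.
have cA : compact A.
  apply: (subclosed_compact _ _ Abox).
    have := preimage_closed (f := H y) (D := [set r | r <= H y y]); apply; first by move=> z _; exact: hc.
    exact: (@closed_le R (H y y)).
  have := @rV_compact R n (fun i => `[y 0 i - B, y 0 i + B]%classic); apply => i; exact: segment_compact.
have [c cAc cmin] := EVT_min_rV (ex_intro _ y (lexx _) : A !=set0) cA (continuous_subspaceT (A:=A) hc).
exists c => z.
have [zA|zA] := boolP (H y z <= H y y).
  by have := cmin z; rewrite !inE /=; apply.
have : H y c <= H y y by move: cAc; rewrite inE.
rewrite -ltNge in zA => h; have := ltW (le_lt_trans h zA).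
by rewrite /H /ig.
Qed.

Lemma prox_spec y : is_prox gamma f y (prox gamma f y).
Proof. exact: (xgetPex 0 (prox_exists y)). Qed.
End Prox.


Lemma fermat_rV (R : realType) n (E : 'rV[R]_n -> R) xs v :
  (forall x, differentiable E x) -> (forall x, E xs <= E x) -> 'd E xs v = 0.
Proof.
move=> dE mn.
pose phi (t : R) := E (t *: v + xs).
have ephi t : (fun h : R => h^-1 *: (phi (h *: 1 + t) - phi t)) =
            (fun h : R => h^-1 *: (E (h *: v + (t *: v + xs)) - E (t *: v + xs))).
  apply/funext => h; rewrite /phi; congr (_ *: (E _ - _)).
  by rewrite scaler1 scalerDl addrA.
have dphi t : derivable phi t 1.
  have := @diff_derivable _ _ _ E (t *: v + xs) v (dE (t *: v + xs)).
  by rewrite /derivable ephi.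
have h01 : (0:R) \in `](-1), 1[%R by rewrite in_itv /=; apply/andP; split; lra.
have pm t : t \in `](-1), 1[%R -> phi 0 <= phi t.
  by move=> _; rewrite /phi scale0r add0r; apply: mn.
have := @derive1_at_min R phi (-1) 1 0 ltac:(lra) (fun t _ => dphi t) h01 pm.
move=> hd; have := @derive_val _ _ _ _ _ _ _ hd.
rewrite /derive ephi scale0r add0r -/(derive E xs v) deriveE //.
Qed.


Section Meas.
Variables (R : realType) (n : nat) (d : measure_display) (Xi : measurableType d)
  (P : probability Xi R).

Lemma le_integral_nm (f g : Xi -> \bar R) :
  (forall x, (0 <= f x)%E) -> (forall x, (f x <= g x)%E) ->
  (\int[P]_x f x <= \int[P]_x g x)%E.
Proof.
move=> f0 fg.
rewrite !ge0_integralTE //; last by move=> x; exact: le_trans (f0 x) (fg x).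
apply: ereal_sup_le => _ [h hf <-]; exists h => //= x.
exact: le_trans (hf x) (fg x).
Qed.

Variable (g : Xi -> 'rV[R]_n).
Hypothesis gi : forall i, P.-integrable setT (fun xi => (g xi 0 i)%:E).
Hypothesis g0 : forall i, (\int[P]_xi (g xi 0 i)%:E = 0)%E.
Variable s : R.
Hypothesis gs : (\int[P]_xi (sqnorm (g xi))%:E = s%:E)%E.

Lemma mes_gi i : measurable_fun setT (fun xi => g xi 0 i).
Proof. by apply/measurable_realfun.measurable_EFinP; exact: (measurable_int _ (gi i)). Qed.

Lemma int_G : P.-integrable setT (fun xi => (sqnorm (g xi))%:E).
Proof.
apply/integrableP; split.
  apply/measurable_realfun.measurable_EFinP; rewrite /sqnorm /dotp.
  apply: measurable_sum => i; apply: measurable_realfun.measurable_funM; exact: mes_gi.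
under eq_integral do rewrite gee0_abs ?lee_fin ?sqnorm_ge0 //.
by rewrite gs ltry.
Qed.

Lemma int_D v : P.-integrable setT (fun xi => (dotp v (g xi))%:E).
Proof.
under eq_fun do rewrite /dotp -sumEFin.
apply: integrable_sum => // i _.
under eq_fun do rewrite EFinM.
exact: integrableZl.
Qed.

Lemma integral_D v : (\int[P]_xi (dotp v (g xi))%:E = 0)%E.
Proof.
under eq_integral do rewrite /dotp -sumEFin.
rewrite integral_sum //; last first.
  by move=> i; under eq_fun do rewrite EFinM; exact: integrableZl.
rewrite big1 // => i _.
under eq_integral do rewrite EFinM.
by rewrite integralZl // g0 mule0.
Qed.

Lemma LIN v (a b c : R) :
  (\int[P]_xi (a + b * dotp v (g xi) + c * sqnorm (g xi))%:E = (a + c * s)%:E)%E.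
Proof.
under eq_integral do rewrite !EFinD !EFinM.
rewrite integralD //; last 2 first.
- apply: integrableD => //; last by apply: integrableZl => //; exact: (int_D v).
  exact: (finite_measure_integrable_cst P a measurableT).
- apply: integrableZl => //; exact: int_G.
rewrite integralD //; last 2 first.
- exact: (finite_measure_integrable_cst P a measurableT).
- by apply: integrableZl => //; exact: (int_D v).
rewrite integral_cst //. have hP : (P : {measure set Xi -> \bar R}) setT = 1%E := probability_setT P. rewrite hP.
rewrite mule1 !integralZl //; last 2 first.
- exact: int_G.
- exact: int_D.
by rewrite integral_D gs mule0 adde0 -EFinM -EFinD.
Qed.
End Meas.

Unset Implicit Arguments. Set Strict Implicit.

Theorem mainTheorem3 (R : realType) (dim : nat) (d : measure_display)
  (Xi : measurableType d) (P : probability Xi R)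
  (F : Xi -> 'rV[R]_dim -> R) (mu : R) (xstar x0 : 'rV[R]_dim) :
  0 < mu ->
  (forall xi x, differentiable (F xi) x) ->
  (forall xi, strongly_convex mu (F xi)) ->
  (forall x, P.-integrable setT (fun xi => (F xi x)%:E)) ->
  (forall x, differentiable (expect_fun P F) x) ->
  (forall x (i : 'I_dim), P.-integrable setT (fun xi => (gradient (F xi) x 0 i)%:E)) ->
  (forall x, gradient (expect_fun P F) x
             = \row_i fine (\int[P]_xi (gradient (F xi) x 0 i)%:E)) ->
  (forall x, expect_fun P F xstar <= expect_fun P F x) ->
  forall gamma : R, 0 < gamma ->
  (forall x (i : 'I_dim), measurable_fun setT (fun xi => prox gamma (F xi) x 0 i)) ->
  forall k : nat,
    (sppm_expect P F gamma (fun x => (sqnorm (x - xstar))%:E) k x0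
     <= ((1 / (1 + gamma * mu)) ^+ (2 * k) * sqnorm (x0 - xstar))%:E
        + (gamma / (gamma * mu ^+ 2 + 2 * mu))%:E * sigma_star2 P F xstar)%E.
Proof.
move=> mu0 dF scF intF dE intg hgrad hmin gamma g0 _ k.
set xs := xstar.
set g := fun xi => gradient (F xi) xs.
have gz i : (\int[P]_xi (g xi 0 i)%:E = 0)%E.
  have h := fermat_rV (delta_mx 0 i) dE hmin.
  have : gradient (expect_fun P F) xs 0 i = 0 by rewrite /gradient mxE.
  rewrite hgrad mxE => hf.
  have fin := integrable_fin_num measurableT (intg xs i).
  by rewrite -(fineK fin) hf.
have S0 : (0 <= sigma_star2 P F xs)%E.
  by apply: integral_ge0 => x _; rewrite lee_fin sqnorm_ge0.
set m := 1 + gamma * mu.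
have m1 : 1 < m by rewrite /m ltrDl mulr_gt0.
set r := (1 / m) ^+ 2.
set b := gamma / (gamma * mu ^+ 2 + 2 * mu).
have b0 : 0 <= b by rewrite /b divr_ge0 ?ltW // addr_gt0 // ?mulr_gt0 ?exprn_gt0.
have r0 : 0 <= r by rewrite /r sqr_ge0.
have r1 : r <= 1.
  rewrite /r expr_le1 // ?divr_ge0 ?ler_pdivrMr; lra.
have rm : r * m ^+ 2 = 1 by rewrite /r -exprMn mul1r mulVf ?expr1n // gt_eqF //; lra.
have br : b * (1 - r) = gamma ^+ 2 * r.
  rewrite /b /r /m; field.
  by apply/andP; split; rewrite gt_eqF //; nra.
case E: (sigma_star2 P F xs) S0 => [s| |] //= S0; last first.
  by rewrite gt0_muley ?lte_fin ?addey ?leey // divr_gt0 // addr_gt0 // ?mulr_gt0 ?exprn_gt0.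
rewrite lee_fin in S0.
have gs : (\int[P]_xi (sqnorm (g xi))%:E = s%:E)%E by rewrite -E.
set Phi := fun x : 'rV[R]_dim => (sqnorm (x - xs))%:E.
have nn : forall j x, (0 <= sppm_expect P F gamma Phi j x)%E.
  elim => [|j IH] x /=; first by rewrite lee_fin sqnorm_ge0.
  by apply: integral_ge0 => xi _; apply: IH.
have claim : forall j x, (sppm_expect P F gamma Phi j x <=
    (r ^+ j * sqnorm (x - xs) + b * (1 - r ^+ j) * s)%:E)%E.
  elim => [|j IH] x /=.
    by rewrite expr0 mul1r subrr mulr0 mul0r addr0.
  set B := b * (1 - r ^+ j) * s.
  have B0 : 0 <= B by rewrite /B mulr_ge0 // mulr_ge0 // subr_ge0 exprn_ile1.
  have rj0 : 0 <= r ^+ j by rewrite exprn_ge0.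
  have h1 := le_integral_nm P (fun xi => nn j (prox gamma (F xi) x)) (fun xi => IH (prox gamma (F xi) x)).
  apply: le_trans h1 _.
  have pw xi : ((r ^+ j * sqnorm (prox gamma (F xi) x - xs) + B)%:E <=
     ((r ^+ j * r * sqnorm (x - xs) + B) + (- 2 * gamma * (r ^+ j * r)) * dotp (x - xs) (g xi)
        + (gamma ^+ 2 * (r ^+ j * r)) * sqnorm (g xi))%:E)%E.
    rewrite lee_fin.
    have px := prox_spec mu0 g0 (scF xi) (dF xi) x.
    have hc := prox_contract mu0 g0 (scF xi) xs px.
    rewrite (sqnormB (x - xs)) dotpZr sqnormZ -/(g xi) in hc.
    have hc' : sqnorm (prox gamma (F xi) x - xs) <= r * (sqnorm (x - xs) - 2 * (gamma * dotp (x - xs) (g xi)) + gamma ^+ 2 * sqnorm (g xi)).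
      apply: le_trans (ler_wpM2l r0 hc); by rewrite mulrA rm mul1r.
    have := ler_wpM2l rj0 hc'.
    nra.
  apply: le_trans (le_integral_nm P _ pw) _.
    by move=> xi; rewrite lee_fin addr_ge0 // mulr_ge0 // sqnorm_ge0.
  rewrite (LIN (fun i => intg xs i) gz gs) lee_fin !(exprSr r j).
  have : b * (1 - r ^+ j * r) = b * (1 - r ^+ j) + b * (1 - r) * r ^+ j by ring.
  rewrite br => ->.
  rewrite /B; nra.
apply: le_trans (claim k x0) _.
rewrite exprM -/r -EFinM -EFinD lee_fin lerD2l.
rewrite -mulrA ler_wpM2l // -[leRHS]mul1r ler_wpM2r // lerBlDr lerDl exprn_ge0 //.
Qed.
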